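(* Let $n\ge 2$ and let $\mathcal{F}_1,\dots,\mathcal{F}_n$ be collections of axis-parallel boxes in $\mathbb{R}^d$. Suppose there exists $j\in[d]$ such that for all $\ell\neq k$ in $[n]$, all $B\in\mathcal{F}_\ell$ and all $B'\in\mathcal{F}_k$, we have $\Pi_j(B)\cap\Pi_j(B')\neq\emptyset$. Then there exists $S\subseteq[n]$ with $|S|\ge n-1$ such that for every $i\in S$ there is a hyperplane orthogonal to the $j$-th coordinate axis (i.e., of the form $\{x\in\mathbb{R}^d: x_j=c\}$) that meets every box of $\mathcal{F}_i$.
   Context: An axis-parallel box in $\mathbb{R}^d$ is a set $B=[\alpha_1,\beta_1]\times\dots\times[\alpha_d,\beta_d]$ with real $\alpha_j\le\beta_j$; $\Pi_j(B)=[\alpha_j,\beta_j]$ denotes its projection onto the $j$-th coordinate axis. *)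

(* Defs.v *)
From HB Require Import structures.
From mathcomp Require Import all_boot all_order all_algebra.
From mathcomp Require Import boolp classical_sets reals.
Set Implicit Arguments. Unset Strict Implicit. Unset Printing Implicit Defensive.
Import Order.TTheory GRing.Theory Num.Theory.
Local Open Scope classical_set_scope.
Local Open Scope ring_scope.

Definition is_box (R : realType) (d : nat) (B : set ('I_d -> R)) : Prop :=
  exists a b : 'I_d -> R, (forall k, a k <= b k) /\
    B = [set x | forall k, a k <= x k <= b k].

Definition proj (R : realType) (d : nat) (j : 'I_d) (B : set ('I_d -> R)) : set R :=
  (fun x => x j) @` B.

Definition hyp_meets (R : realType) (d : nat) (j : 'I_d) (c : R) (B : set ('I_d -> R)) : Prop :=
  exists x, B x /\ x j = c.

(* Main.v *)
Require Import Defs.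
From HB Require Import structures.
From mathcomp Require Import all_boot all_order all_algebra.
From mathcomp Require Import boolp classical_sets reals.
From mathcomp Require Import lra.
Import Order.TTheory GRing.Theory Num.Theory.
Local Open Scope classical_set_scope.
Local Open Scope ring_scope.

Definition boxab (R : realType) (d : nat) (a b : 'I_d -> R) : set ('I_d -> R) :=
  [set x | forall k, a k <= x k <= b k].
Arguments boxab {R d}.

Lemma meet_iff (R : realType) (d : nat) (j : 'I_d) (a b a' b' : 'I_d -> R) :
  (forall k, a k <= b k) -> (forall k, a' k <= b' k) ->
  (proj j (boxab a b) `&` proj j (boxab a' b') !=set0) <-> (a j <= b' j /\ a' j <= b j).
Proof.
move=> hab hab'; split.
  case=> t [[x hx <-] [y hy hyx]].
  have := hx j; have := hy j; rewrite -hyx => /andP[h1 h2] /andP[h3 h4].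
  split; lra.
case=> h1 h2.
have [hle|hle] := leP (a j) (a' j).
- exists (a' j); split.
    exists (fun k => if k == j then a' j else a k); last by rewrite eqxx.
    move=> k; case: eqP => [->|_]; last by rewrite lexx hab.
    by apply/andP; split.
  exists (fun k => if k == j then a' j else a' k); last by rewrite eqxx.
  by move=> k; case: eqP => [->|_]; rewrite lexx hab'.
- exists (a j); split.
    exists (fun k => if k == j then a j else a k); last by rewrite eqxx.
    by move=> k; case: eqP => [->|_]; rewrite lexx hab.
  exists (fun k => if k == j then a j else a' k); last by rewrite eqxx.
  move=> k; case: eqP => [->|_]; last by rewrite lexx hab'.
  apply/andP; split => //; exact: ltW.
Qed.

Lemma isbox_eq (R : realType) {d : nat} (B : set ('I_d -> R)) :
  is_box B -> exists a b, (forall k, a k <= b k) /\ B = boxab a b.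
Proof. by []. Qed.

Theorem lemma2 (R : realType) (d n : nat) (F : 'I_n -> set (set ('I_d -> R)))
  (hn : (2 <= n)%N)
  (hbox : forall i B, F i B -> is_box B)
  (j : 'I_d)
  (hj : forall l k : 'I_n, l != k -> forall B B', F l B -> F k B' ->
          proj j B `&` proj j B' !=set0) :
  exists S : {set 'I_n}, (n - 1 <= #|S|)%N /\
    forall i, i \in S -> exists c : R, forall B, F i B -> hyp_meets j c B.
Proof.
pose P i := forall B B', F i B -> F i B' -> proj j B `&` proj j B' !=set0.
have good : forall i, P i -> exists c : R, forall B, F i B -> hyp_meets j c B.
  move=> i Pi.
  have [[B0 FB0]|F0] := pselect (exists B, F i B); last first.
    by exists 0 => B FB; exfalso; apply: F0; exists B.
  pose L := [set t : R | exists B a b, [/\ F i B, (forall k, a k <= b k),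
                 B = boxab a b & t = a j]].
  have ubL : forall B a b, F i B -> (forall k, a k <= b k) -> B = boxab a b ->
      ubound L (b j).
    move=> B a b FB hab eB t [B' [a' [b' [FB' hab' eB' ->]]]].
    have := Pi _ _ FB FB'; rewrite eB eB' meet_iff //; by case.
  have [a0 [b0 [hab0 eB0]]] := hbox _ _ FB0.
  have L0 : L !=set0 by exists (a0 j); exists B0, a0, b0.
  have hL : has_ubound L by exists (b0 j); exact: (ubL _ _ _ FB0 hab0 eB0).
  exists (sup L) => B FB.
  have [a [b [hab eB]]] := hbox _ _ FB.
  have h1 : a j <= sup L by apply: ub_le_sup => //; exists B, a, b.
  have h2 : sup L <= b j by apply: ge_sup => //; exact: ubL FB hab eB.
  exists (fun k => if k == j then sup L else a k); split; last by rewrite eqxx.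
  rewrite eB => k; case: eqP => [->|_]; last by rewrite lexx hab.
  by rewrite h1 h2.
pose sep i := exists B B' a b a' b', [/\ F i B /\ F i B', (forall k, a k <= b k) /\
  (forall k, a' k <= b' k), B = boxab a b, B' = boxab a' b' & b j < a' j].
have nsep : forall i, ~ P i -> sep i.
  move=> i /existsNP [B /existsNP [B' nP]].
  move: nP => /not_implyP [FB /not_implyP [FB' nm]].
  have [a [b [hab eB]]] := hbox _ _ FB.
  have [a' [b' [hab' eB']]] := hbox _ _ FB'.
  move: nm; rewrite eB eB' meet_iff // => nm.
  have [h|h] := ltP (b j) (a' j).
    by exists B, B', a, b, a', b'; split.
  have [h'|h'] := ltP (b' j) (a j).
    by exists B', B, a', b', a, b; split.
  by exfalso; apply: nm.
have two : forall i k, i != k -> sep i -> sep k -> False.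
  move=> i k ik [B1 [B2 [a1 [b1 [a2 [b2 [[F1 F2] [h1 h2] e1 e2 l12]]]]]]]
    [C1 [C2 [c1 [d1 [c2 [d2 [[G1 G2] [g1 g2] f1 f2 m12]]]]]]].
  have := hj _ _ ik _ _ F2 G1; rewrite e2 f1 meet_iff // => -[x1 x2].
  have := hj _ _ ik _ _ F1 G2; rewrite e1 f2 meet_iff // => -[y1 y2].
  move: l12 x1 m12 y2; clear; lra.
have [[i0 ni0]|nex] := pselect (exists i, ~ P i).
  exists [set~ i0]%SET; split; first by rewrite cardsC1 card_ord subn1.
  move=> i; rewrite !inE => ii0; apply: good.
  apply: contrapT => nPi; apply: (two i i0) => //; exact: nsep.
exists [set: 'I_n]%SET; split; first by rewrite cardsT card_ord leq_subr.
move=> i _; apply: good; apply: contrapT => nPi; apply: nex; by exists i.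
Qed.
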